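(* Let $\beta>0$, $\sigma^2>0$ and $snr=\sigma^{-2}$. Let $P_X$ be a distribution on a constellation $\mathcal{S}\subset\mathbb{C}$ with finite second moment, and let $\omega_{\mathcal S}(\rho)$ be its scalar MMSE function (defined below). Define $\phi(v)=(\beta v+\sigma^2)^{-1}$ for $v\ge 0$, whose inverse is $\phi^{-1}(\rho)=\beta^{-1}(1/\rho-\sigma^2)$ for $0<\rho\le snr$. Assume (single fixed point) that the equation $\omega_{\mathcal S}(\rho)=\phi^{-1}(\rho)$ has exactly one solution $\rho^*>0$; equivalently, with $\zeta^*=snr/\rho^*-1$, $\zeta^*$ is the unique positive solution of $\zeta=\beta\cdot snr\cdot\omega_{\mathcal S}\big(snr/(1+\zeta)\big)$. Let $$C=\beta^{-1}\Big[\log(1+\zeta^* )-\frac{\zeta^*}{1+\zeta^*}\Big]+C_{\rm SISO}\Big(\frac{snr}{1+\zeta^*}\Big),$$ which is the constrained capacity (per signal dimension) of the large random matrix system described below. Define $\omega^*_{\mathcal C}(\rho)=\min\{\omega_{\mathcal S}(\rho),\phi^{-1}(\rho)\}$ for $0<\rho\le snr$. Then $$C=A_{\omega^*_{\mathcal C}}:=\int_0^{snr}\omega^*_{\mathcal C}(\rho)\,d\rho=\beta^{-1}\Big[\frac{\rho^*}{snr}-\log\frac{\rho^*}{snr}-1\Big]+\int_0^{\rho^*}\omega_{\mathcal S}(\rho)\,d\rho .$$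
   Context: Scalar channel: $y=\sqrt{\rho}\,x+z$ with $z\sim\mathcal{CN}(0,1)$ independent of $x\sim P_X$; $\omega_{\mathcal S}(\rho)=\mathrm{mmse}(x\mid \sqrt{\rho}x+z)=\mathrm{E}|x-\mathrm{E}[x\mid y]|^2$, a continuous nonincreasing function of $\rho\ge0$. $C_{\rm SISO}(\rho^* )=I(x;\sqrt{\rho^*}x+z)=\int_0^{\rho^*}\omega_{\mathcal S}(\rho)\,d\rho$ (I-MMSE relation). The large random matrix system is $\mathbf y=\mathbf A\mathbf x+\mathbf n$ with $\mathbf A\in\mathbb C^{M\times N}$ having IID $\mathcal{CN}(0,1/M)$ entries, $\mathbf x$ having IID entries $\sim P_X$, $\mathbf n\sim\mathcal{CN}(0,\sigma^2 I_M)$, in the limit $M,N\to\infty$ with $\beta=N/M$ fixed; $snr=\sigma^{-2}$. *)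

(* Defs.v *)
From HB Require Import structures.
From mathcomp Require Import all_boot all_order all_algebra.
From mathcomp Require Import all_classical all_reals all_analysis.
Set Implicit Arguments. Unset Strict Implicit. Unset Printing Implicit Defensive.
Import Order.TTheory GRing.Theory Num.Theory.
Import numFieldNormedType.Exports.
Local Open Scope classical_set_scope.
Local Open Scope ring_scope.

(* Complex numbers are represented as pairs (Re, Im) in R * R. *)
Section Channel.
Context {R : realType}.
Notation CC := (R * R)%type.

Definition cnorm2 (z : CC) : R := z.1 ^+ 2 + z.2 ^+ 2.

Definition cgauss (z : CC) : R := pi^-1 * expR (- cnorm2 z).

(* likelihood p(y | x) of the channel y = sqrt(rho) x + z, z ~ CN(0,1) *)
Definition lik (rho : R) (x y : CC) : R :=
  cgauss (y.1 - Num.sqrt rho * x.1, y.2 - Num.sqrt rho * x.2).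

Definition leb2 := ((@lebesgue_measure R) \x (@lebesgue_measure R))%E.

Definition cond_mean (P : probability CC R) (rho : R) (y : CC) : CC :=
  let den := Rintegral P setT (fun x => lik rho x y) in
  (Rintegral P setT (fun x => x.1 * lik rho x y) / den,
   Rintegral P setT (fun x => x.2 * lik rho x y) / den).

(* omega_S(rho) = mmse(x | sqrt(rho) x + z) = E|x - E[x|y]|^2,
   the expectation being over the joint law of (x, y). *)
Definition mmse (P : probability CC R) (rho : R) : R :=
  fine (\int[P]_x \int[leb2]_y
          ((cnorm2 (x.1 - (cond_mean P rho y).1, x.2 - (cond_mean P rho y).2)
            * lik rho x y)%:E))%E.

(* C_SISO(r) = I(x; sqrt(r) x + z) = \int_0^r omega_S (I-MMSE relation) *)
Definition C_SISO (P : probability CC R) (r : R) : R :=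
  Rintegral (@lebesgue_measure R) `[0, r] (mmse P).

Definition phi_inv (beta sigma2 rho : R) : R := beta^-1 * (rho^-1 - sigma2).

End Channel.

(* Main.v *)
Require Import Defs.
From HB Require Import structures.
From mathcomp Require Import all_boot all_order all_algebra.
From mathcomp Require Import all_classical all_reals all_analysis.
From mathcomp Require Import measurable_realfun ring.
Import Order.TTheory GRing.Theory Num.Theory.
Import numFieldNormedType.Exports.
Local Open Scope classical_set_scope.
Local Open Scope ring_scope.
Lemma integrableU_disj (d : measure_display) (T : measurableType d) (R : realType)
  (mu : measure T R) (A B : set T) (f : T -> \bar R) :
  measurable A -> measurable B -> [disjoint A & B] ->
  mu.-integrable A f -> mu.-integrable B f -> mu.-integrable (A `|` B) f.
Proof.
move=> mA mB AB /integrableP[mfA iA] /integrableP[mfB iB].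
have mf := proj2 (measurable_funU f mA mB) (conj mfA mfB).
apply/integrableP; split => //.
rewrite integral_setU //; last by apply: measurableT_comp.
by rewrite lte_add_pinfty.
Qed.

Lemma phi_inv_cont (R : realType) (b s x : R) : 0 < x -> {for x, continuous (phi_inv b s)}.
Proof.
move=> x0; rewrite /phi_inv; apply: continuousM; first exact: cvg_cst.
apply: continuousB; last exact: cvg_cst.
by apply: inv_continuous; rewrite gt_eqF.
Qed.

Lemma g_cont (R : realType) (f : R -> R) (b s a c : R) : 0 < a ->
  {within `[0, +oo[, continuous f} ->
  {within `[a, c], continuous (fun r => f r - phi_inv b s r)}.
Proof.
move=> a0 fc.
have h1 : {within `[a, c], continuous f}.
  apply: continuous_subspaceW fc => r /=; rewrite !in_itv /= => /andP[ar _].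
  by rewrite (le_trans (ltW a0) ar).
have h2 : {within `[a, c], continuous (phi_inv b s)}.
  apply: continuous_in_subspaceT => r; rewrite inE /= in_itv /= => /andP[ar _].
  exact: phi_inv_cont (lt_le_trans a0 ar).
move=> x; apply: continuousB; [exact: h1 | exact: h2].
Qed.

Section Signs.
Variables (R : realType) (f : R -> R) (b s rs : R).
Hypotheses (b0 : 0 < b) (s0 : 0 < s).
Hypothesis fc : {within `[0, +oo[, continuous f}.
Hypothesis f0 : forall r, 0 <= f r.
Hypothesis rs0 : 0 < rs.
Hypothesis rsn : rs <= s^-1.
Hypothesis uniq : forall rho, 0 < rho <= s^-1 -> f rho = phi_inv b s rho -> rho = rs.

Lemma sign_low r : 0 < r -> r < rs -> f r <= phi_inv b s r.
Proof.
move=> r0 rrs; rewrite leNgt; apply/negP => hlt.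
have fcr : {within `[0, r], continuous f}.
  apply: continuous_subspaceW fc => t /=; rewrite !in_itv /= => /andP[t0 _].
  by rewrite t0.
have [c cr fcM] := EVT_max (ltW r0) fcr.
set M := f c in fcM.
have M0 : 0 <= M := f0 c.
set e := r / (1 + r * (b * M + s)).
have den0 : 1 <= 1 + r * (b * M + s).
  rewrite lerDl; apply: mulr_ge0; first exact: ltW.
  by apply: addr_ge0; [apply: mulr_ge0; [exact: ltW|] | exact: ltW].
have den0' : 0 < 1 + r * (b * M + s) by apply: lt_le_trans den0.
have e0 : 0 < e by rewrite /e divr_gt0.
have er : e <= r.
  by rewrite /e ler_pdivrMr // ler_peMr // ltW.
have ie : e^-1 = r^-1 + b * M + s.
  by rewrite /e invf_div mulrDl mul1r mulrAC mulfV ?gt_eqF // mul1r addrA.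
have phe : M < phi_inv b s e.
  rewrite /phi_inv ie.
  have -> : b^-1 * (r^-1 + b * M + s - s) = b^-1 * r^-1 + M.
    by rewrite addrK mulrDr mulrA mulVf ?gt_eqF // mul1r.
  by rewrite ltrDr mulr_gt0 // invr_gt0.
have fe : f e <= M.
  by apply: fcM; rewrite in_itv /= (ltW e0) er.
have cond : Num.min (f e - phi_inv b s e) (f r - phi_inv b s r) <= 0 <=
    Num.max (f e - phi_inv b s e) (f r - phi_inv b s r).
  rewrite ge_min le_max !subr_le0 !subr_ge0.
  by rewrite (le_trans fe (ltW phe)) (ltW hlt) orbT.
have [c' c'in /eqP] := IVT er (@g_cont R f b s e r e0 fc) cond.
rewrite subr_eq0 => /eqP gc'.
move: c'in; rewrite in_itv /= => /andP[ec' c'r].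
have c'0 : 0 < c' := lt_le_trans e0 ec'.
have c'le : 0 < c' <= s^-1 by rewrite c'0 (le_trans c'r (le_trans (ltW rrs) rsn)).
have E := uniq c' c'le gc'.
by move: (le_lt_trans c'r rrs); rewrite E ltxx.
Qed.

Lemma sign_high r : rs < r -> r <= s^-1 -> phi_inv b s r <= f r.
Proof.
move=> rsr rn; rewrite leNgt; apply/negP => hlt.
have r0 : 0 < r := lt_trans rs0 rsr.
have phs : phi_inv b s s^-1 = 0 by rewrite /phi_inv invrK subrr mulr0.
have cond : Num.min (f r - phi_inv b s r) (f s^-1 - phi_inv b s s^-1) <= 0 <=
    Num.max (f r - phi_inv b s r) (f s^-1 - phi_inv b s s^-1).
  by rewrite phs subr0 ge_min le_max subr_le0 (ltW hlt) (f0 s^-1) orbT.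
have [c' c'in /eqP] := IVT rn (@g_cont R f b s r s^-1 r0 fc) cond.
rewrite subr_eq0 => /eqP gc'.
move: c'in; rewrite in_itv /= => /andP[rc' c'n].
have c'le : 0 < c' <= s^-1 by rewrite (lt_le_trans r0 rc') c'n.
have E := uniq c' c'le gc'.
by move: (lt_le_trans rsr rc'); rewrite E ltxx.
Qed.
End Signs.
Lemma isdF (R : realType) (b s x : R) : 0 < x ->
  is_derive x 1 (b^-1 \*: (@ln R - s \*: id)) (phi_inv b s x).
Proof.
move=> x0.
have := is_deriveZ b^-1 (is_deriveB (is_derive1_ln x0) (is_deriveZ s (is_derive_id x (1:R)))).
rewrite /phi_inv /= => H; apply: (is_derive_eq H).
by rewrite -[s%:A]/(s * 1) mulr1.
Qed.

Lemma ftc_phi (R : realType) (b s a c : R) : 0 < a -> a < c ->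
  Rintegral (@lebesgue_measure R) `[a, c] (phi_inv b s) =
  b^-1 * (ln c - s * c) - b^-1 * (ln a - s * a).
Proof.
move=> a0 ac.
have cF : forall x, 0 < x -> {for x, continuous (b^-1 \*: (@ln R - s \*: id))}.
  move=> x x0; apply: continuousZr; apply: continuousB; first exact: continuous_ln.
  apply: continuousZr; exact: cvg_id.
rewrite /Rintegral (@continuous_FTC2 _ _ (b^-1 \*: (@ln R - s \*: id))) //.
- apply: continuous_in_subspaceT => r; rewrite inE /= in_itv /= => /andP[ar _].
  exact: phi_inv_cont (lt_le_trans a0 ar).
- split.
  + move=> x; rewrite in_itv /= => /andP[ax _].
    have := isdF R b s x (lt_trans a0 ax); by case.
  + apply: cvg_at_right_filter; exact: cF.
  + apply: cvg_at_left_filter; exact: cF (lt_trans a0 ac).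
- move=> x; rewrite in_itv /= => /andP[ax _].
  have H := isdF R b s x (lt_trans a0 ax).
  by rewrite derive1E derive_val.
Qed.

Lemma mmse_ge0 (R : realType) (P : probability (R * R)%type R) (rho : R) : 0 <= mmse P rho.
Proof.
rewrite /mmse; apply: fine_ge0; apply: integral_ge0 => x _.
apply: integral_ge0 => y _; rewrite lee_fin; apply: mulr_ge0.
  by rewrite /cnorm2 addr_ge0 // sqr_ge0.
by rewrite /lik /cgauss mulr_ge0 // ?invr_ge0 ?pi_ge0 // expR_ge0.
Qed.

Lemma ln_div (R : realType) (x y : R) : 0 < x -> 0 < y -> ln (x / y) = ln x - ln y.
Proof.
move=> x0 y0; rewrite lnM ?lnV //; by rewrite posrE ?invr_gt0.
Qed.
Theorem proposition1 (R : realType) (P : probability (R * R)%type R)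
    (beta sigma2 rhostar : R) :
  0 < beta -> 0 < sigma2 ->
  P.-integrable setT (fun x => (cnorm2 x)%:E) ->
  {within `[0, +oo[, continuous (mmse P)} ->
  let snr := sigma2^-1 in
  0 < rhostar <= snr ->
  mmse P rhostar = phi_inv beta sigma2 rhostar ->
  (forall rho, 0 < rho <= snr ->
     mmse P rho = phi_inv beta sigma2 rho -> rho = rhostar) ->
  let zetastar := snr / rhostar - 1 in
  let C := beta^-1 * (ln (1 + zetastar) - zetastar / (1 + zetastar))
           + C_SISO P (snr / (1 + zetastar)) in
  let A := Rintegral (@lebesgue_measure R) `]0, snr]
             (fun rho => Num.min (mmse P rho) (phi_inv beta sigma2 rho)) in
  C = A /\
  A = beta^-1 * (rhostar / snr - ln (rhostar / snr) - 1)
      + Rintegral (@lebesgue_measure R) `[0, rhostar] (mmse P).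
Proof.
move=> b0 s0 _ fc snr /andP[rs0 rsn] hrs uniq zetastar C A.
have f0 : forall r, 0 <= mmse P r := @mmse_ge0 R P.
have low : forall r, 0 < r <= rhostar -> mmse P r <= phi_inv beta sigma2 r.
  move=> r /andP[r0 rr]; case: (ltP r rhostar) => [lt|ge].
    exact: (@sign_low R (mmse P) beta sigma2 rhostar b0 s0 fc f0 rsn uniq r r0 lt).
  have -> : r = rhostar by apply/le_anti; rewrite rr ge.
  by rewrite hrs.
have high : forall r, rhostar <= r <= snr -> phi_inv beta sigma2 r <= mmse P r.
  move=> r /andP[rr rn]; case: (ltP rhostar r) => [lt|ge].
    exact: (@sign_high R (mmse P) beta sigma2 rhostar fc f0 rs0 uniq r lt rn).
  have -> : r = rhostar by apply/le_anti; rewrite rr ge.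
  by rewrite hrs.
have snr0 : 0 < snr by rewrite invr_gt0.
have ifc : (@lebesgue_measure R).-integrable `[0, rhostar] (EFin \o mmse P).
  apply: continuous_compact_integrable; first exact: segment_compact.
  apply: continuous_subspaceW fc => t /=; rewrite !in_itv /= => /andP[t0 _].
  by rewrite t0.
have ipc : (@lebesgue_measure R).-integrable `[rhostar, snr]
    (EFin \o phi_inv beta sigma2).
  apply: continuous_compact_integrable; first exact: segment_compact.
  apply: continuous_in_subspaceT => r; rewrite inE /= in_itv /= => /andP[ar _].
  exact: phi_inv_cont (lt_le_trans rs0 ar).
have ifo : (@lebesgue_measure R).-integrable `]0, rhostar] (EFin \o mmse P).
  apply: integrableS ifc => // t /=; rewrite !in_itv /= => /andP[t0 ->].
  by rewrite ltW.
have ipo : (@lebesgue_measure R).-integrable `]rhostar, snr]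
    (EFin \o phi_inv beta sigma2).
  apply: integrableS ipc => // t /=; rewrite !in_itv /= => /andP[t0 ->].
  by rewrite ltW.
have hm1 : {in `]0, rhostar]%classic, (fun rho => Num.min (mmse P rho)
    (phi_inv beta sigma2 rho)) =1 mmse P}.
  move=> r; rewrite inE /= => /andP[r0 rr]; apply: min_l.
  by apply: low; move: r0 rr; rewrite !bnd_simp => -> ->.
have hm2 : {in `]rhostar, snr]%classic, (fun rho => Num.min (mmse P rho)
    (phi_inv beta sigma2 rho)) =1 phi_inv beta sigma2}.
  move=> r; rewrite inE /= => /andP[r0 rr]; apply: min_r.
  by apply: high; move: r0 rr; rewrite !bnd_simp => /ltW -> ->.
have disj : [disjoint `]0, rhostar] & `]rhostar, snr]].
  apply/disj_setPS => x [] /=; rewrite !in_itv /= => /andP[_ xb] /andP[bx _].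
  by move: (lt_le_trans bx xb); rewrite ltxx.
have hA : A = Rintegral (@lebesgue_measure R) `[0, rhostar] (mmse P)
   + Rintegral (@lebesgue_measure R) `[rhostar, snr] (phi_inv beta sigma2).
  rewrite /A (@itv_bndbnd_setU _ _ (BRight 0) (BRight rhostar) (BRight snr));
    last 2 first.
  - by rewrite bnd_simp ltW.
  - by rewrite bnd_simp.
  rewrite Rintegral_setU //; last first.
    apply: integrableU_disj => //.
    + apply: (eq_integrable _ _ _ _ ifo) => // r rin /=.
      by rewrite (hm1 r rin).
    + apply: (eq_integrable _ _ _ _ ipo) => // r rin /=.
      by rewrite (hm2 r rin).
  rewrite -(Rintegral_itv_obnd_cbnd ifo) -(Rintegral_itv_obnd_cbnd ipo).
  congr (_ + _); apply: eq_Rintegral => r rin.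
    exact: hm1.
  exact: hm2.
have hI : Rintegral (@lebesgue_measure R) `[rhostar, snr] (phi_inv beta sigma2)
    = beta^-1 * (rhostar / snr - ln (rhostar / snr) - 1).
  case: (ltP rhostar snr) => [lt|ge].
    rewrite ftc_phi // ln_div //.
    rewrite /snr; field.
    by rewrite !gt_eqF.
  have E : rhostar = snr by apply/le_anti; rewrite rsn ge.
  rewrite E set_itv1 Rintegral_set1 divff ?gt_eqF // ln1.
  by rewrite subr0 subrr mulr0.
have HA2 : A = beta^-1 * (rhostar / snr - ln (rhostar / snr) - 1)
    + Rintegral (@lebesgue_measure R) `[0, rhostar] (mmse P).
  by rewrite hA hI addrC.
split => //.
rewrite HA2 /C /C_SISO.
have z1 : 1 + zetastar = snr / rhostar by rewrite /zetastar addrC subrK.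
rewrite z1.
have -> : snr / (snr / rhostar) = rhostar.
  by field; rewrite !gt_eqF.
have -> : zetastar / (snr / rhostar) = 1 - rhostar / snr.
  by rewrite /zetastar; field; rewrite !gt_eqF.
congr (_ + _); rewrite !ln_div //; ring.
Qed.
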